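(* Let $X$ be a pure $d$-dimensional simplicial complex which is a $\gamma$-coboundary expander with coefficients in a group $G$, and let $1\le k\le d-1$. Then for every $f\in C^1(R_k(X);G)$, $\|d_1f\|\ \ge\ \gamma\cdot \mathrm{dist}\big(f, Z^1(R_k(X);G)\big)$, where norms and distances are taken in $R_k(X)$.
   Context: $X(i)$ = faces with $i+1$ elements. For a pure $D$-dimensional complex $Y$, weights $w_Y(\sigma)=|\{\tau\in Y(D):\sigma\subseteq\tau\}|/(\binom{D+1}{|\sigma|}|Y(D)|)$; norm of a set of faces = sum of weights. Link $X_\sigma=\{\tau\setminus\sigma:\sigma\subseteq\tau\in X\}$. Cochains: $C^0(Y;G)$ functions on vertices; $C^1(Y;G)$ functions $f$ on ordered edges with $f(v,u)=f(u,v)^{-1}$; $d_0g(u,v)=g(u)g(v)^{-1}$; $d_1f(u,v,w)=f(u,v)f(v,w)f(w,u)$ on triangles; $B^0$ = constants, $B^1=\mathrm{im}\,d_0$, $Z^1=\{f:d_1f\equiv1\}$; $\|f\|$ = norm of the set of faces where $f\ne1$, $\mathrm{dist}(f,g)=\|fg^{-1}\|$. $h_0(Y;G)=\min_{g\notin B^0}\|d_0g\|/\mathrm{dist}(g,B^0)$, $h_1(Y;G)=\min_{f\notin B^1}\|d_1f\|/\mathrm{dist}(f,B^1)$; $X$ is a $\gamma$-coboundary expander with coefficients in $G$ if $h_0(X_\sigma;G),h_1(X_\sigma;G)\ge\gamma$ for every face $\sigma$ of dimension $<d-2$ (including $\emptyset$). The $k$-th representation complex $R_k(X)$: its vertices are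 the faces in $X(k)$; for $1\le i\le d-k$ its $i$-faces are the sets $S$ of $i+1$ distinct elements of $X(k)$ with $\bigcup S\in X(i+k)$ and $|\bigcap S|=k$; plus the empty face. It is pure of dimension $d-k$ with its own weights. *)

(* Defs.v *)
From HB Require Import structures.
From mathcomp Require Import boolp classical_sets reals.
From mathcomp Require Import all_boot all_order all_algebra.
Set Implicit Arguments. Unset Strict Implicit. Unset Printing Implicit Defensive.
Import Order.TTheory GRing.Theory Num.Theory.

Local Open Scope ring_scope.

Section Complex.
Variable T : finType.
Implicit Types (Y : {set {set T}}) (s t : {set T}).

Definition simplicial_complex Y : Prop :=
  set0 \in Y /\ forall t s, t \in Y -> s \subset t -> s \in Y.

Definition pure_dim Y (D : nat) : Prop :=
  (forall t, t \in Y -> (#|t| <= D.+1)%N) /\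
  (forall t, t \in Y -> exists2 u, u \in Y & (#|u| == D.+1) && (t \subset u)).

Definition link Y s : {set {set T}} := [set t :\: s | t in Y & s \subset t].

Definition top_faces Y (D : nat) := [set t in Y | #|t| == D.+1].

Definition weight (R : realType) Y (D : nat) s : R :=
  (#|[set t in top_faces Y D | s \subset t]|)%:R /
  (('C(D.+1, #|s|) * #|top_faces Y D|)%N)%:R.
End Complex.

Section Cochains.
Variables (R : realType) (G : groupType) (T : finType).
Variables (Y : {set {set T}}) (D : nat).

Definition vertexY (v : T) := [set v] \in Y.
Definition edgeY (u v : T) := (u != v) && ([set u; v] \in Y).
Definition triY (u v w : T) :=
  [&& u != v, v != w, w != u & [set u; v; w] \in Y].

Definition C1 (f : T -> T -> G) : Prop :=
  forall u v, edgeY u v -> f v u = ((f u v)^-1)%g.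

Definition d0 (g : T -> G) : T -> T -> G := fun u v => (g u * (g v)^-1)%g.
Definition d1 (f : T -> T -> G) : T -> T -> T -> G :=
  fun u v w => (f u v * f v w * f w u)%g.

Definition norm0 (g : T -> G) : R :=
  \sum_(s in Y | [exists v, (s == [set v]) && (g v != 1%g)]) weight R Y D s.
Definition norm1 (f : T -> T -> G) : R :=
  \sum_(s in Y | [exists u, exists v,
      [&& u != v, s == [set u; v] & f u v != 1%g]]) weight R Y D s.
Definition norm2 (h : T -> T -> T -> G) : R :=
  \sum_(s in Y | [exists u, exists v, exists w,
      [&& u != v, v != w, w != u, s == [set u; v; w] & h u v w != 1%g]])
    weight R Y D s.

Definition B0 (g : T -> G) : Prop :=
  exists c : G, forall v, vertexY v -> g v = c.
Definition B1 (f : T -> T -> G) : Prop :=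
  exists g : T -> G, forall u v, edgeY u v -> f u v = d0 g u v.
Definition Z1 (f : T -> T -> G) : Prop :=
  C1 f /\ forall u v w, triY u v w -> d1 f u v w = 1%g.

Definition dist0 (g : T -> G) (S : (T -> G) -> Prop) : R :=
  inf [set norm0 (fun v => (g v * (b v)^-1)%g) | b in S]%classic.
Definition dist1 (f : T -> T -> G) (S : (T -> T -> G) -> Prop) : R :=
  inf [set norm1 (fun u v => (f u v * (b u v)^-1)%g) | b in S]%classic.

(* h_0(Y;G) >= gamma  and  h_1(Y;G) >= gamma  (h_i is a minimum of ratios) *)
Definition h0_ge (gamma : R) : Prop :=
  forall g : T -> G, ~ B0 g -> gamma <= norm1 (d0 g) / dist0 g B0.
Definition h1_ge (gamma : R) : Prop :=
  forall f : T -> T -> G, C1 f -> ~ B1 f -> gamma <= norm2 (d1 f) / dist1 f B1.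
End Cochains.

(* gamma-coboundary expander with coefficients in G, for X pure d-dimensional:
   h_0, h_1 of every link X_sigma, dim sigma < d - 2 (incl. sigma = empty),
   are >= gamma; the link X_sigma is pure of dimension d - |sigma|. *)
Definition coboundary_expander (R : realType) (G : groupType) (V : finType)
    (X : {set {set V}}) (d : nat) (gamma : R) : Prop :=
  forall sigma, sigma \in X -> (#|sigma|.+1 < d)%N ->
    h0_ge G (link X sigma) (d - #|sigma|) gamma /\
    h1_ge G (link X sigma) (d - #|sigma|) gamma.

Definition rep_complex (V : finType) (X : {set {set V}}) (d k : nat)
  : {set {set {set V}}} :=
  [set S : {set {set V}} |
     (S == set0)
  || [exists s, [&& S == [set s], s \in X & #|s| == k.+1]]
  || [&& (2 <= #|S|)%N, (#|S| <= (d - k).+1)%N,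
         [forall s in S, (s \in X) && (#|s| == k.+1)],
         (\bigcup_(s in S) s) \in X,
         #|\bigcup_(s in S) s| == (#|S| + k)%N &
         #|\bigcap_(s in S) s| == k]].

(* Main.v *)
Require Import Defs.
From mathcomp Require Import all_boot all_order all_algebra.
From mathcomp Require Import boolp classical_sets reals.
Import Order.TTheory GRing.Theory Num.Theory.
Local Open Scope ring_scope.
Set Implicit Arguments. Unset Strict Implicit. Unset Printing Implicit Defensive.
From mathcomp Require Import fintype finset.
From mathcomp Require Import ring zify.

Lemma inf_attained (R : realType) (I : finType) (F : I -> R) (E : set R) :
  (exists e, E e) -> (forall e, E e -> exists i, F i = e) -> E (inf E).
Proof.
move=> [e Ee] HE.
have [i0 Fi0] := HE e Ee.
pose P := fun i => `[< E (F i) >].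
have P0 : P i0 by apply/asboolP; rewrite Fi0.
case: (@arg_minP _ R I i0 P F P0) => j /asboolP Ej Hj.
suff -> : inf E = F j by [].
apply/le_anti/andP; split.
  have hl : has_lbound E.
    exists (F j) => x Ex.
    have [i Fi] := HE x Ex. subst x. apply: Hj. by apply/asboolP.
  exact: ge_inf hl _ Ej.
apply: lb_le_inf; first by exists e.
move=> x Ex; have [i Fi] := HE x Ex. subst x. apply: Hj. by apply/asboolP.
Qed.

Lemma sum_sub_le (R : numDomainType) (J : finType) (S P : {pred J}) (F : J -> R) :
  (forall j, S j -> P j) -> (forall j, 0 <= F j) ->
  \sum_(j | S j) F j <= \sum_(j | P j) F j.
Proof.
move=> SP F0.
rewrite [X in _ <= X](bigID S) /=.
have -> : \sum_(j | P j && S j) F j = \sum_(j | S j) F j.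
  apply: eq_bigl => j; case Sj: (S j); rewrite ?andbT ?andbF //.
  by rewrite SP.
by rewrite lerDl sumr_ge0.
Qed.

Lemma sum_imset_le (R : numDomainType) (I J : finType) (h : I -> J)
    (Q : {pred I}) (P : {pred J}) (F : J -> R) :
  (forall j, 0 <= F j) -> {in Q &, injective h} -> (forall i, Q i -> P (h i)) ->
  \sum_(i | Q i) F (h i) <= \sum_(j | P j) F j.
Proof.
move=> F0 inj QP.
have -> : \sum_(i | Q i) F (h i) = \sum_(j in h @: [set i | Q i]) F j.
  rewrite big_imset /=; last by move=> x y; rewrite !inE; apply: inj.
  by apply: eq_bigl => i; rewrite inE.
apply: sum_sub_le => // j /imsetP [i]; rewrite inE => Qi ->.
exact: QP.
Qed.

Lemma sum_surj_le (R : numDomainType) (I J : finType) (h : I -> J)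
    (Q : {pred I}) (P : {pred J}) (F : J -> R) :
  (forall j, 0 <= F j) -> (forall j, P j -> exists2 i, Q i & h i = j) ->
  \sum_(j | P j) F j <= \sum_(i | Q i) F (h i).
Proof.
move=> F0 surj.
apply: (@le_trans _ _ (\sum_(i | Q i && P (h i)) F (h i))); last first.
  by apply: sum_sub_le => // i /andP[].
rewrite (partition_big h P) /=; last by move=> i /andP[].
apply: ler_sum => j Pj.
have [i Qi hij] := surj j Pj.
rewrite (bigD1 i) /=; last by rewrite Qi hij Pj eqxx.
rewrite hij lerDl sumr_ge0 //.
Qed.

Definition Phi (V : finType) (tau A : {set V}) : {set {set V}} :=
  [set a |: tau | a in A].

Definition dj (V : finType) (A tau : {set V}) := forall a, a \in A -> a \notin tau.

Lemma L0 (V : finType) (tau : {set V}) a b :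
  a \notin tau -> b \notin tau -> a |: tau = b |: tau -> a = b.
Proof.
move=> na nb E.
have : a \in b |: tau by rewrite -E setU11.
by case/setU1P => // aT; rewrite aT in na.
Qed.

Lemma L1 (V : finType) (tau : {set V}) a b :
  a \notin tau -> b \notin tau -> a != b -> (a |: tau) :&: (b |: tau) = tau.
Proof.
move=> na nb ab; apply/setP => x; rewrite !inE.
case: (eqVneq x a) => [->|xa]; first by rewrite (negbTE ab) (negbTE na).
case: (eqVneq x b) => [->|xb] /=; first by rewrite (negbTE nb) ?andbF ?andbT ?orbF; case: (b == a).
by rewrite andbb.
Qed.

Lemma L2 (V : finType) (tau : {set V}) a b :
  a \notin tau -> b \notin tau -> a != b -> (a |: tau) :\: (b |: tau) = [set a].
Proof.
move=> na nb ab; apply/setP => x; rewrite !inE.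
case: (eqVneq x a) => [->|xa]; first by rewrite (negbTE ab) (negbTE na).
by case: (x \in tau); rewrite ?orbT ?andbF.
Qed.

Lemma Phi_sub (V : finType) (tau A A' : {set V}) :
  dj A tau -> dj A' tau -> Phi tau A \subset Phi tau A' -> A \subset A'.
Proof.
move=> dA dA' /subsetP H; apply/subsetP => x xA.
have /imsetP [y yA' E] : x |: tau \in Phi tau A' by apply: H; apply: imset_f.
by rewrite (L0 (dA x xA) (dA' y yA') E).
Qed.

Lemma Phi_inj (V : finType) (tau A A' : {set V}) :
  dj A tau -> dj A' tau -> Phi tau A = Phi tau A' -> A = A'.
Proof.
move=> dA dA' E; apply/eqP; rewrite finset.eqEsubset.
by rewrite (Phi_sub dA dA') ?E // (Phi_sub dA' dA) ?E.
Qed.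

Lemma card_Phi (V : finType) (tau A : {set V}) : dj A tau -> #|Phi tau A| = #|A|.
Proof.
move=> dA; apply: card_in_imset => x y xA yA; exact: L0 (dA x xA) (dA y yA).
Qed.

Lemma Phi_tau (V : finType) (tau tau' A A' : {set V}) :
  dj A tau -> dj A' tau' -> (1 < #|A|)%N -> Phi tau A \subset Phi tau' A' ->
  tau = tau'.
Proof.
move=> dA dA' /card_gt1P [a [b [aA bA ab]]] /subsetP H.
have /imsetP [a1 a1A Ea] : a |: tau \in Phi tau' A' by apply: H; apply: imset_f.
have /imsetP [b1 b1A Eb] : b |: tau \in Phi tau' A' by apply: H; apply: imset_f.
have ab1 : a1 != b1.
  apply: contra ab => /eqP e; apply/eqP; apply: (L0 (dA a aA) (dA b bA)).
  by rewrite Ea Eb e.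
by rewrite -(L1 (dA a aA) (dA b bA) ab) Ea Eb (L1 (dA' _ a1A) (dA' _ b1A) ab1).
Qed.

Lemma linkP (V : finType) (X : {set {set V}}) (tau A : {set V}) :
  reflect (exists2 t, (t \in X) && (tau \subset t) & A = t :\: tau) (A \in link X tau).
Proof.
apply: (iffP imsetP) => [[t Ht ->]|[t Ht ->]]; exists t => //.
  by move: Ht; rewrite inE.
by rewrite inE.
Qed.

Lemma rep_big (V : finType) (X : {set {set V}}) d k (S : {set {set V}}) : (1 < #|S|)%N ->
  (S \in rep_complex X d k) = [&& (#|S| <= (d - k).+1)%N,
     [forall s in S, (s \in X) && (#|s| == k.+1)],
     (\bigcup_(s in S) s) \in X,
     #|\bigcup_(s in S) s| == (#|S| + k)%N &
     #|\bigcap_(s in S) s| == k].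
Proof.
move=> S2; rewrite inE.
have -> : (S == finset.set0) = false by apply/negbTE; rewrite -card_gt0; apply: ltnW.
have -> : [exists s, [&& S == [set s], s \in X & #|s| == k.+1]] = false.
  apply/negbTE/existsPn => s; apply/negP => /and3P [/eqP E _ _].
  by move: S2; rewrite E cards1.
by rewrite S2.
Qed.

Lemma SL (V : finType) (X : {set {set V}}) d k (S : {set {set V}}) :
  simplicial_complex X -> S \in rep_complex X d k -> (1 < #|S|)%N ->
  exists tau A, [/\ tau \in X, #|tau| = k, S = Phi tau A, A \in link X tau & dj A tau].
Proof.
move=> [_ Hsc] SR S2; move: SR; rewrite rep_big // => /and5P [_ /forall_inP Hs UX _ /eqP cI].
set tau := \bigcap_(s in S) s; set U := \bigcup_(s in S) s.
have tauS : forall s, s \in S -> tau \subset s by move=> s sS; rewrite /tau; apply: bigcap_inf.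
have [s0 s0S] : exists s0, s0 \in S by apply/card_gt0P; apply: ltnW.
have sU : forall s, s \in S -> s \subset U by move=> s sS; apply: bigcup_sup.
have tauU : tau \subset U := subset_trans (tauS s0 s0S) (sU s0 s0S).
have tauX : tau \in X := Hsc U tau UX tauU.
have form : forall s, s \in S -> exists2 a, a \notin tau & s = a |: tau.
  move=> s sS; have /andP[_ /eqP cs] := Hs s sS.
  have : #|s :\: tau| == 1%N by rewrite cardsD (setIidPr (tauS s sS)) cs cI subSnn.
  case/cards1P => a Ea.
  have aT : a \notin tau.
    have : a \in s :\: tau by rewrite Ea set11.
    by case/setDP.
  exists a => //; apply/setP => x; rewrite !inE.
  case xT : (x \in tau); first by rewrite orbT (subsetP (tauS s sS)).
  rewrite orbF; have := congr1 (fun B : {set V} => x \in B) Ea; rewrite !inE xT /=. by [].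
exists tau, (U :\: tau); split => //.
- apply/setP => s; apply/idP/imsetP.
    move=> sS; have [a aT Es] := form s sS; exists a => //; rewrite inE aT /=.
    by apply: (subsetP (sU _ sS)); rewrite Es setU11.
  move=> [a /setDP [aU aT] ->]; have /bigcupP [s1 sS aS] := aU.
  have [b bT Es] := form s1 sS; rewrite Es in aS; case/setU1P: aS => [e|]; last by rewrite (negbTE aT).
  by rewrite e -Es.
- by apply/linkP; exists U => //; rewrite UX tauU.
- by move=> a /setDP[].
Qed.

Lemma CL (V : finType) (X : {set {set V}}) d k (tau t : {set V}) :
  simplicial_complex X -> #|tau| = k -> t \in X -> tau \subset t ->
  (1 < #|t :\: tau|)%N -> (#|t :\: tau| <= (d - k).+1)%N ->
  Phi tau (t :\: tau) \in rep_complex X d k.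
Proof.
move=> [_ Hsc] ct tX tt A2 Ad; set A := t :\: tau.
have dA : dj A tau by move=> a /setDP[].
rewrite rep_big ?card_Phi //.
have Ueq : \bigcup_(s in Phi tau A) s = t.
  apply/eqP; rewrite eqEsubset; apply/andP; split.
    apply/bigcupsP => s /imsetP [a aA ->]; rewrite subUset sub1set tt andbT.
    by move: aA => /setDP[].
  apply/subsetP => x xt; case xT: (x \in tau).
    have [a aA] : exists a, a \in A by apply/card_gt0P; apply: ltnW.
    by apply/bigcupP; exists (a |: tau); [apply: imset_f | rewrite setU1r].
  apply/bigcupP; exists (x |: tau); last by rewrite setU11.
  by apply: imset_f; rewrite inE xT xt.
have Ieq : \bigcap_(s in Phi tau A) s = tau.
  apply/eqP; rewrite eqEsubset; apply/andP; split; last first.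
    by apply/bigcapsP => s /imsetP [a _ ->]; apply: subsetUr.
  have [a [b [aA bA ab]]] := card_gt1P A2.
  apply/subsetP => x /bigcapP H.
  have := H _ (imset_f (fun a => a |: tau) aA); have := H _ (imset_f (fun a => a |: tau) bA).
  rewrite !inE; case: (x \in tau); rewrite ?orbT // !orbF => /eqP e1 /eqP e2.
  by rewrite -e1 -e2 eqxx in ab.
rewrite Ueq Ieq tX ct eqxx Ad andbT /=.
apply/andP; split.
  apply/forall_inP => s /imsetP [a aA ->]; apply/andP; split.
    by apply: (Hsc t) => //; rewrite subUset sub1set tt andbT; move: aA => /setDP[].
  by rewrite cardsU1 (dA a aA) ct.
rewrite /A cardsD (setIidPr tt) ct subnK //.
by rewrite -ct subset_leq_card.
Qed.

Lemma link_dj (V : finType) (X : {set {set V}}) (tau A : {set V}) :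
  A \in link X tau -> dj A tau.
Proof. by case/linkP => t _ -> a /setDP[]. Qed.

Lemma count_eq (V : finType) (X : {set {set V}}) d k (tau A : {set V}) :
  simplicial_complex X -> #|tau| = k -> (1 <= d - k)%N ->
  A \in link X tau -> (1 < #|A|)%N ->
  #|[set S' in top_faces (rep_complex X d k) (d - k) | Phi tau A \subset S']| =
  #|[set A' in top_faces (link X tau) (d - k) | A \subset A']|.
Proof.
move=> sc ct dk AL A2.
have dA := link_dj AL.
set B := [set A' in top_faces (link X tau) (d - k) | A \subset A'].
suff -> : [set S' in top_faces (rep_complex X d k) (d - k) | Phi tau A \subset S'] =
          [set Phi tau A' | A' in B].
  apply: card_in_imset => x y; rewrite !inE => /andP [/andP [xL _] _] /andP [/andP [yL _] _].
  exact: Phi_inj (link_dj xL) (link_dj yL).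
apply/setP => S'; apply/idP/imsetP.
  case/setIdP => /setIdP [SR /eqP cS] sub.
  have S2 : (1 < #|S'|)%N by rewrite cS ltnS.
  have [tau' [A' [_ _ E AL' dA']]] := SL sc SR S2.
  rewrite E in sub.
  have et := Phi_tau dA dA' A2 sub; subst tau'.
  exists A' => //; apply/setIdP; split; last exact: (Phi_sub dA dA' sub).
  by apply/setIdP; split => //; rewrite -(card_Phi dA') -E cS.
case=> A' /setIdP [/setIdP [AL' /eqP cA'] sub] ->.
have dA' := link_dj AL'.
apply/setIdP; split; last exact: imsetS.
apply/setIdP; split; last by rewrite card_Phi // cA'.
have [t /andP [tX tt] Et] := linkP _ _ _ AL'.
rewrite Et; apply: CL => //; rewrite -Et cA' //.
Qed.

Definition cw (R : realType) (V : finType) (X : {set {set V}}) d k (tau : {set V}) : R :=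
  #|top_faces (link X tau) (d - k)|%:R / #|top_faces (rep_complex X d k) (d - k)|%:R.

Lemma weight_Phi (R : realType) (V : finType) (X : {set {set V}}) d k (tau A : {set V}) :
  simplicial_complex X -> #|tau| = k -> (1 <= d - k)%N ->
  A \in link X tau -> (1 < #|A|)%N ->
  weight R (rep_complex X d k) (d - k) (Phi tau A) =
  cw R X d k tau * weight R (link X tau) (d - k) A.
Proof.
move=> sc ct dk AL A2.
rewrite /weight /cw count_eq // card_Phi; last exact: link_dj AL.
set n := #|[set A' in _ | _]|.
set C := 'C(_, _); set N := #|top_faces (rep_complex X d k) _|.
set Nt := #|top_faces (link X tau) _|.
have [Nt0|Nt0] := eqVneq Nt 0%N.
  have -> : n = 0%N.
    apply/eqP; rewrite -leqn0 -Nt0; apply: subset_leq_card.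
    by apply/subsetP => x /setIdP [].
  by rewrite mulr0n !mul0r mulr0.
rewrite !natrM !invfM.
have h : (Nt%:R : R) * (Nt%:R)^-1 = 1 by rewrite mulfV // pnatr_eq0.
move: h; move: (Nt%:R : R) (Nt%:R^-1 : R) (n%:R : R) (C%:R^-1 : R) (N%:R^-1 : R).
move=> x xi y c m h.
have -> : x * m * (y * (c * xi)) = (x * xi) * (y * (c * m)) by ring.
by rewrite h mul1r.
Qed.

Lemma weight_ge0 (R : realType) (T : finType) (Y : {set {set T}}) D s :
  0 <= weight R Y D s.
Proof. by rewrite /weight divr_ge0 ?ler0n. Qed.

Lemma norm1_ge0 (R : realType) (G : groupType) (T : finType) (Y : {set {set T}}) D
  (h : T -> T -> G) : 0 <= norm1 R Y D h.
Proof. by apply: sumr_ge0 => s _; apply: weight_ge0. Qed.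

Lemma norm2_ge0 (R : realType) (G : groupType) (T : finType) (Y : {set {set T}}) D
  (h : T -> T -> T -> G) : 0 <= norm2 R Y D h.
Proof. by apply: sumr_ge0 => s _; apply: weight_ge0. Qed.

Lemma norm1_one (R : realType) (G : groupType) (T : finType) (Y : {set {set T}}) D
  (f : T -> T -> G) : norm1 R Y D (fun u v => (f u v * (f u v)^-1)%g) = 0.
Proof.
rewrite /norm1 big_pred0 // => s; apply/negbTE; rewrite negb_and; apply/orP; right.
by apply/existsPn => u; apply/existsPn => v; rewrite mulgV eqxx !andbF.
Qed.

Lemma dist1_ge0 (R : realType) (G : groupType) (T : finType) (Y : {set {set T}}) D
  (f : T -> T -> G) (S : (T -> T -> G) -> Prop) b0 : S b0 -> 0 <= dist1 R Y D f S.
Proof.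
move=> Sb0; apply: lb_le_inf; first by exists (norm1 R Y D (fun u v => (f u v * (b0 u v)^-1)%g)); exists b0.
by move=> x [b _ <-]; apply: norm1_ge0.
Qed.

Lemma dist1_le (R : realType) (G : groupType) (T : finType) (Y : {set {set T}}) D
  (f : T -> T -> G) (S : (T -> T -> G) -> Prop) b : S b ->
  dist1 R Y D f S <= norm1 R Y D (fun u v => (f u v * (b u v)^-1)%g).
Proof.
move=> Sb; apply: ge_inf; last by exists b.
by exists 0 => x [c _ <-]; apply: norm1_ge0.
Qed.

Lemma norm1_ext (R : realType) (G : groupType) (T : finType) (Y : {set {set T}}) D
  (h1 h2 : T -> T -> G) : (forall u v, edgeY Y u v -> h1 u v = h2 u v) ->
  norm1 R Y D h1 = norm1 R Y D h2.
Proof.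
move=> E; apply: eq_bigl => s; case sY: (s \in Y) => //=.
apply/existsP/existsP => [] [u /existsP [v /and3P [uv /eqP Es hn]]]; exists u; apply/existsP; exists v;
  rewrite uv Es eqxx /=.
  by rewrite -E // /edgeY uv -Es sY.
by rewrite E // /edgeY uv -Es sY.
Qed.

Lemma dist1_B1_attained (R : realType) (G : groupType) (T : finType) (Y : {set {set T}}) D
  (f : T -> T -> G) : exists g : T -> G,
  norm1 R Y D (fun u v => (f u v * (d0 g u v)^-1)%g) = dist1 R Y D f (B1 Y).
Proof.
set E := [set norm1 R Y D (fun u v => (f u v * (b u v)^-1)%g) | b in B1 Y]%classic.
have : E (inf E).
  apply: (@inf_attained R _ (fun B : {set {set T}} => \sum_(s in Y | s \in B) weight R Y D s)).
    exists (norm1 R Y D (fun u v => (f u v * (1%g)^-1)%g)); exists (fun _ _ => 1%g) => //.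
    by exists (fun _ => 1%g) => u v _; rewrite /d0 invg1 mulg1.
  move=> e [b _ <-].
  exists [set s | [exists u, exists v, [&& u != v, s == [set u; v] &
      (f u v * (b u v)^-1)%g != 1%g]]].
  by apply: eq_bigl => s; rewrite inE.
move=> [b [g Hg] Eb]; exists g; rewrite /dist1 -/E -Eb.
by apply: norm1_ext => u v uv; rewrite Hg.
Qed.

Definition bglue (G : groupType) (V : finType) (gg : {set V} -> V -> G) (s t : {set V}) : G :=
  (oapp (gg (s :&: t)) 1%g [pick x in s :\: t] *
   (oapp (gg (s :&: t)) 1%g [pick x in t :\: s])^-1)%g.

Lemma pick_set1 (V : finType) (a : V) : [pick x in [set a]] = Some a.
Proof.
case: pickP => [x /set1P -> //|/(_ a)]; by rewrite set11.
Qed.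

Lemma b_eval (G : groupType) (V : finType) (gg : {set V} -> V -> G) (tau : {set V}) a c :
  a \notin tau -> c \notin tau -> a != c ->
  bglue gg (a |: tau) (c |: tau) = d0 (gg tau) a c.
Proof.
move=> na nc ac.
by rewrite /bglue (L1 na nc ac) (L2 na nc ac) (L2 nc na) 1?eq_sym // !pick_set1.
Qed.

Lemma in_Phi (V : finType) (tau A : {set V}) s :
  s \in Phi tau A -> exists2 a, a \in A & s = a |: tau.
Proof. by case/imsetP => a aA ->; exists a. Qed.

Lemma glue_Z1 (G : groupType) (V : finType) (X : {set {set V}}) d k
  (gg : {set V} -> V -> G) :
  simplicial_complex X -> Z1 (rep_complex X d k) (bglue gg).
Proof.
move=> sc; split.
  by move=> s t _; rewrite /bglue setIC invgF.
move=> s t r /and4P [st tr rs SR].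
have S2 : (1 < #|[set s; t; r]|)%N.
  apply/card_gt1P; exists s, t; split => //; rewrite !inE eqxx ?orbT //.
have [tau [A [_ _ E _ dA]]] := SL sc SR S2.
have : s \in Phi tau A by rewrite -E !inE eqxx.
have : t \in Phi tau A by rewrite -E !inE eqxx ?orbT.
have : r \in Phi tau A by rewrite -E !inE eqxx ?orbT.
move=> /in_Phi [e eA Er] /in_Phi [c cA Et] /in_Phi [a aA Es].
have ne : forall x y, x \in A -> y \in A -> x |: tau != y |: tau -> x != y.
  by move=> x y _ _; apply: contra => /eqP ->.
have ac : a != c by apply: ne => //; rewrite -Es -Et.
have ce : c != e by apply: ne => //; rewrite -Et -Er.
have ea : e != a by apply: ne => //; rewrite -Er -Es.
rewrite /d1 Es Et Er !b_eval ?dA // /d0.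
by rewrite divgKA divgKA mulgV.
Qed.

Lemma card3 (T : finType) (s t r : T) : s != t -> t != r -> r != s ->
  (3 <= #|[set s; t; r]|)%N.
Proof.
move=> st tr rs; apply/card_geqP; exists [:: s; t; r]; split => //.
  by rewrite /= !inE negb_or st tr eq_sym rs.
by move=> x; rewrite !inE => /or3P [] /eqP ->; rewrite eqxx ?orbT.
Qed.

Definition P1 (G : groupType) (T : finType) (h : T -> T -> G) (s : {set T}) : bool :=
  [exists u, exists v, [&& u != v, s == [set u; v] & h u v != 1%g]].
Definition P2 (G : groupType) (T : finType) (h : T -> T -> T -> G) (s : {set T}) : bool :=
  [exists u, exists v, exists w,
      [&& u != v, v != w, w != u, s == [set u; v; w] & h u v w != 1%g]].

Unset Implicit Arguments.

Theorem mainTheorem3 (R : realType) (G : groupType) (V : finType)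
    (X : {set {set V}}) (d : nat) (gamma : R) (k : nat) :
  simplicial_complex X -> pure_dim X d ->
  coboundary_expander G X d gamma ->
  (1 <= k)%N -> (k <= d - 1)%N ->
  forall f : {set V} -> {set V} -> G,
    C1 (rep_complex X d k) f ->
    gamma * dist1 R (rep_complex X d k) (d - k) f (Z1 (rep_complex X d k))
      <= norm2 R (rep_complex X d k) (d - k) (d1 f).
Proof.
move=> sc pd ce k1 kd f Cf.
set RK := rep_complex X d k.
have n2_ge0 := norm2_ge0 R RK (d - k) (d1 f).
have dist_ge0 : 0 <= dist1 R RK (d - k) f (Z1 RK).
  by apply: dist1_ge0; apply: (glue_Z1 d k (fun _ _ => 1%g) sc).
case: (ltP gamma 0) => [gneg|gpos].
  by apply: le_trans n2_ge0; apply: mulr_le0_ge0 => //; apply: ltW.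
case: (ltnP k.+1 d) => hk; last first.
  have Zf : Z1 RK f.
    split => // s t r /and4P [st tr rs SR]; exfalso.
    have c3 := card3 st tr rs.
    move: SR; rewrite rep_big; last by apply: leq_trans c3.
    case/and5P => cle _ _ _ _.
    have := leq_trans c3 cle; rewrite ltnS => h2.
    have : (d - k <= 1)%N by rewrite leq_subLR addn1.
    by move=> h1; have := leq_trans h2 h1.
  have := dist1_le R RK (d - k) f Zf; rewrite norm1_one => dle.
  have -> : dist1 R RK (d - k) f (Z1 RK) = 0 by apply/le_anti; rewrite dle dist_ge0.
  by rewrite mulr0.
set D := (d - k)%N.
have D2 : (2 <= D)%N by rewrite /D ltn_subRL addn1.
pose Tk := fun tau : {set V} => (tau \in X) && (#|tau| == k).
pose ft := fun (tau : {set V}) (u v : V) => f (u |: tau) (v |: tau).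
pose dt := fun tau => dist1 R (link X tau) D (ft tau) (B1 (link X tau)).
pose n2t := fun tau => norm2 R (link X tau) D (d1 (ft tau)).
have [gg Hgg] := @choice _ _ (fun tau (g : V -> G) =>
   norm1 R (link X tau) D (fun u v => (ft tau u v * (d0 g u v)^-1)%g) = dt tau)
   (fun tau => @dist1_B1_attained R G V (link X tau) D (ft tau)).
have cw_ge0 : forall tau, 0 <= cw R X d k tau by move=> tau; rewrite /cw divr_ge0 ?ler0n.
have local : forall tau, Tk tau -> gamma * dt tau <= n2t tau.
  move=> tau /andP [tX /eqP ct].
  have ck : (#|tau|.+1 < d)%N by rewrite ct.
  have [_ h1] := ce tau tX ck.
  rewrite ct -/D in h1.
  have C1t : C1 (link X tau) (ft tau).
    move=> u v /andP [uv uvL]; apply: Cf.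
    have dA := link_dj uvL.
    have nu : u \notin tau by apply: dA; rewrite !inE eqxx.
    have nv : v \notin tau by apply: dA; rewrite !inE eqxx orbT.
    apply/andP; split.
      by apply: contra uv => /eqP /(L0 nu nv) ->.
    have -> : [set u |: tau; v |: tau] = Phi tau [set u; v] by rewrite /Phi imsetU1 imset_set1.
    have [t /andP [tX' tt] Et] := linkP _ _ _ uvL.
    rewrite Et; apply: CL => //; rewrite -Et cards2 uv //.
    by apply: leq_trans D2 _.
  have dt0 : 0 <= dt tau.
    by apply: dist1_ge0; exists (fun _ => 1%g).
  have n0 : 0 <= n2t tau by apply: norm2_ge0.
  case: (leP (dt tau) 0) => [dle|dpos].
    have -> : dt tau = 0 by apply/le_anti; rewrite dle dt0.
    by rewrite mulr0.
  have nB : ~ B1 (link X tau) (ft tau).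
    move=> HB; have := dist1_le R (link X tau) D (ft tau) HB.
    rewrite norm1_one -/(dt tau) => h; have := lt_le_trans dpos h.
    by rewrite ltxx.
  have := h1 _ C1t nB.
  by rewrite ler_pdivlMr // mulrC.
have step_d : norm1 R RK D (fun s t => (f s t * (bglue gg s t)^-1)%g) <=
              \sum_(tau | Tk tau) cw R X d k tau * dt tau.
  pose Q := fun p : {set V} * {set V} => [&& Tk p.1, p.2 \in link X p.1 &
     P1 (fun u v => (ft p.1 u v * (d0 (gg p.1) u v)^-1)%g) p.2].
  apply: (le_trans (@sum_surj_le R _ _ (fun p => Phi p.1 p.2) Q
    (fun S => (S \in RK) && P1 (fun s t => (f s t * (bglue gg s t)^-1)%g) S)
    (weight R RK D) _ _)).
  - by move=> j; apply: weight_ge0.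
  - move=> S /andP [SR /existsP [s /existsP [t /and3P [st /eqP ES hn]]]].
    have S2 : (1 < #|S|)%N by rewrite ES cards2 st.
    have [tau [A [tX ct EP AL dA]]] := SL sc SR S2.
    have : s \in Phi tau A by rewrite -EP ES !inE eqxx.
    case/in_Phi => a aA Es.
    have : t \in Phi tau A by rewrite -EP ES !inE eqxx orbT.
    case/in_Phi => c cA Et.
    have ac : a != c by apply: contra st => /eqP e; rewrite Es Et e.
    have EA : A = [set a; c].
      apply/eqP; rewrite eq_sym eqEcard subUset !sub1set aA cA /=.
      by rewrite -(card_Phi dA) -EP ES !cards2 st ac.
    exists (tau, A) => //=.
    rewrite /Q /Tk /= tX ct eqxx AL /=.
    apply/existsP; exists a; apply/existsP; exists c; rewrite ac EA eqxx /=.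
    move: hn; rewrite Es Et b_eval ?dA //.
  rewrite (eq_bigr (fun p => cw R X d k p.1 * weight R (link X p.1) D p.2)); last first.
    move=> [tau A] /and3P [/andP [_ /eqP ct] AL /existsP [u /existsP [v /and3P [uv /eqP EA _]]]].
    by apply: weight_Phi => //; rewrite ?EA ?cards2 ?uv // /D subn_gt0 (ltn_trans _ hk).
  rewrite -(pair_big_dep Tk (fun tau A => (A \in link X tau) &&
     P1 (fun u v => (ft tau u v * (d0 (gg tau) u v)^-1)%g) A)
     (fun tau A => cw R X d k tau * weight R (link X tau) D A)) /=.
  apply: ler_sum => tau _.
  by rewrite -Hgg /norm1 mulr_sumr.
have step_e : \sum_(tau | Tk tau) cw R X d k tau * n2t tau <= norm2 R RK D (d1 f).
  pose Q := fun p : {set V} * {set V} => [&& Tk p.1, p.2 \in link X p.1 &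
     P2 (d1 (ft p.1)) p.2].
  have Q3 : forall p, Q p -> (1 < #|p.2|)%N.
    move=> p /and3P [_ _ /existsP [u /existsP [v /existsP [w /and5P [uv vw wu /eqP E _]]]]].
    by rewrite E; apply: leq_trans (card3 uv vw wu).
  have -> : \sum_(tau | Tk tau) cw R X d k tau * n2t tau =
            \sum_(p | Q p) weight R RK D (Phi p.1 p.2).
    rewrite (eq_bigr (fun tau => \sum_(A | (A \in link X tau) && P2 (d1 (ft tau)) A)
                 cw R X d k tau * weight R (link X tau) D A)); last first.
      by move=> tau _; rewrite /n2t /norm2 mulr_sumr.
    rewrite (pair_big_dep Tk (fun tau A => (A \in link X tau) && P2 (d1 (ft tau)) A)
     (fun tau A => cw R X d k tau * weight R (link X tau) D A)) /=.
    apply: eq_bigr => -[tau A] Hp; have A2 := Q3 _ Hp.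
    move: Hp => /and3P [/andP [_ /eqP ct] AL _].
    by rewrite weight_Phi // /D subn_gt0 (ltn_trans _ hk).
  apply: (@sum_imset_le R _ _ (fun p => Phi p.1 p.2) Q
    (fun S => (S \in RK) && P2 (d1 f) S) (weight R RK D)).
  - by move=> j; apply: weight_ge0.
  - move=> [tau A] [tau' A'] Hp0 Hq0 /= E.
    have Hp : Q (tau, A) := Hp0. have Hq : Q (tau', A') := Hq0.
    have A2 := Q3 _ Hp; rewrite /Q /= in Hp Hq.
    have dA : dj A tau by case/and3P: Hp => _ AL _; exact: (link_dj AL).
    have dA' : dj A' tau' by case/and3P: Hq => _ AL _; exact: (link_dj AL).
    have sub : Phi tau A \subset Phi tau' A' by rewrite E subxx.
    have et := Phi_tau dA dA' A2 sub.
    subst tau'; by rewrite (Phi_inj dA dA' E).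
  - move=> [tau A] Hp; have A2 := Q3 _ Hp.
    rewrite /Q /= in Hp; move: Hp => /and3P [/andP [tX /eqP ct] AL /existsP [u /existsP [v /existsP [w /and5P [uv vw wu /eqP EA hn]]]]].
    have dA := link_dj AL.
    have nu : u \notin tau by apply: dA; rewrite EA !inE eqxx.
    have nv : v \notin tau by apply: dA; rewrite EA !inE eqxx ?orbT.
    have nw : w \notin tau by apply: dA; rewrite EA !inE eqxx ?orbT.
    have ne : forall x y, x \notin tau -> y \notin tau -> x != y -> x |: tau != y |: tau.
      by move=> x y nx ny; apply: contra => /eqP /(L0 nx ny) ->.
    apply/andP; split.
      have [t /andP [tX' tt] Et] := linkP _ _ _ AL.
      rewrite /= Et; apply: CL => //; rewrite -Et //.
      case: pd => pd1 _; have := pd1 t tX'.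
      rewrite Et cardsD (setIidPr tt) ct => h.
      clear -h hk; lia.
    apply/existsP; exists (u |: tau); apply/existsP; exists (v |: tau); apply/existsP; exists (w |: tau).
    rewrite !ne //= EA /Phi !imsetU !imset_set1 eqxx /=.
    exact: hn.
apply: (le_trans _ step_e).
apply: (@le_trans _ _ (gamma * \sum_(tau | Tk tau) cw R X d k tau * dt tau)).
  apply: ler_wpM2l => //; apply: (le_trans _ step_d).
  by apply: dist1_le; apply: glue_Z1.
rewrite mulr_sumr; apply: ler_sum => tau Ht.
by rewrite mulrCA; apply: ler_wpM2l => //; apply: local.
Qed.
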